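(* Let $k\geq 1$ and $n\geq 2$ be integers. Then $C_{k,n}^2-C_{k,n-1}C_{k,n+1}=-8(k-1)^{n}$.
   Context: For an integer $k\geq 1$, the generalized balancing-Lucas numbers are defined by $C_{k,0}=1$, $C_{k,1}=3$ and $C_{k,n}=3kC_{k,n-1}+(1-k)C_{k,n-2}$ for $n\geq 2$. *)

(* Defs.v *)
From mathcomp Require Import all_boot all_algebra.
Set Implicit Arguments. Unset Strict Implicit. Unset Printing Implicit Defensive.
Import GRing.Theory.
Local Open Scope ring_scope.

Fixpoint balLucas (k : nat) (n : nat) : int :=
  match n with
  | 0%N => 1
  | 1%N => 3
  | (m.+1 as n1).+1 => 3 * (k%:Z) * balLucas k n1 + (1 - k%:Z) * balLucas k m
  end.

(* Main.v *)
Require Import Defs.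
From mathcomp Require Import all_boot all_algebra.
From mathcomp Require Import ring.
Import GRing.Theory.
Local Open Scope ring_scope.

Lemma recL (k m : nat) : balLucas k m.+2 = 3 * (k%:Z) * balLucas k m.+1 + (1 - k%:Z) * balLucas k m.
Proof. by []. Qed.

Lemma cass (k m : nat) :
  balLucas k m.+1 ^+ 2 - balLucas k m * balLucas k m.+2 = - 8 * (k%:Z - 1) ^+ m.+1.
Proof.
elim: m => [|m IH].
  rewrite recL /=. ring.
rewrite exprS -mulrCA -IH !recL. ring.
Qed.

Theorem mainTheorem16 (k n : nat) (hk : (1 <= k)%N) (hn : (2 <= n)%N) :
  balLucas k n ^+ 2 - balLucas k n.-1 * balLucas k n.+1
    = - 8 * (k%:Z - 1) ^+ n.
Proof.
case: n hn => [|n] // _. exact: cass.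
Qed.
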